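(* Let $\bm L=(L_1,\dots,L_r)$ be linear functionals on complex Laurent polynomials with $L_j[w^k]=L_j[w^{-k}]$ for all $k\in\mathbb N$, $j=1,\dots,r$, and let $M_j$ be the linear functional on complex polynomials with $M_j[x^k]=L_j[(w+w^{-1})^k]$, $k\in\mathbb N$; $\bm M=(M_1,\dots,M_r)$. Suppose that $(\bm n;\bm n)$ and $(\bm n+\bm e_j;\bm n)$ are normal for $\bm L$ for all $\bm n\in\mathbb N^r$ and $j=1,\dots,r$. Then $\bm M$ is perfect, and for every $\bm n\in\mathbb N^r$ we have $\alpha_{\bm n;\bm n}\ne-1$ and $$P_{\bm n}(z+z^{-1})=\frac{1}{1+\alpha_{\bm n;\bm n}}\big(\Phi_{\bm n;\bm n}(z)+\Phi_{\bm n;\bm n}(1/z)\big),$$ and, for every $j$ with $n_j\ge1$, $$P_{\bm n}(z+z^{-1})=\Phi_{\bm n;\bm n-\bm e_j}(z)+\Phi_{\bm n;\bm n-\bm e_j}(1/z).$$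
   Context: Fix $r\ge1$; $\mathbb N=\{0,1,2,\dots\}$; $\bm e_j$ is the $j$-th standard unit vector; for $\bm v\in\mathbb Z^r$, $|\bm v|=v_1+\dots+v_r$ (signed). Let $c_{k,j}=L_j[w^{-k}]$. For $(\bm n;\bm m)\in\mathbb Z^r\times\mathbb Z^r$ with $n_j+m_j\ge0$ for all $j$ and $\bm n\ne-\bm m$, $T_{\bm n;\bm m}$ is the square matrix of size $|\bm n|+|\bm m|$ with rows indexed by $(j,k)$, $1\le j\le r$, $-m_j\le k\le n_j-1$ (ordered by $j$, then increasing $k$), columns indexed by $i=-|\bm m|,\dots,|\bm n|-1$, entries $c_{k-i,j}$; $T_{\bm n;-\bm n}:=1$; $(\bm n;\bm m)$ is normal (for $\bm L$) if $\det T_{\bm n;\bm m}\ne0$. For normal $(\bm n;\bm m)$, $\bm n\ne-\bm m$, $\Phi_{\bm n;\bm m}$ is the unique Laurent polynomial in $\operatorname{span}\{z^k\}_{k=-|\bm m|}^{|\bm n|}$ with $z^{|\bm n|}$-coefficient $1$ and $L_j[\Phi_{\bm n;\bm m}(w)w^{-k}]=0$ for $-m_j\le k\le n_j-1$, all $j$; $\Phi_{\bm 0;\bm 0}=1$; $\alpha_{\bm n;\bm m}$ is the $z^{-|\bm m|}$-coefficient of $\Phi_{\bm n;\bm m}$. For the system $\bm M$ on polynomials, a multi-index $\bm n\in\mathbb N^r$ is normal if there is a unique polynomial $P_{\bm n}$ of degree $|\bm n|$ with leading coefficient $1$ such that $M_j[P_{\bm n}(x)x^k]=0$ for $k=0,\dots,n_j-1$,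 $j=1,\dots,r$ (the type II multiple orthogonal polynomial); $\bm M$ is perfect if every $\bm n\in\mathbb N^r$ is normal. *)

(* Defs.v *)
(* Complex numbers are C := complex R for a real closed field R
   (R = the reals gives the usual complex numbers). *)
From HB Require Import structures.
From mathcomp Require Import all_boot all_order all_algebra.
From mathcomp Require Export complex.
Set Implicit Arguments. Unset Strict Implicit. Unset Printing Implicit Defensive.
Import Order.TTheory GRing.Theory Num.Theory.
Local Open Scope ring_scope.

Section Defs.
Variables (R : rcfType) (r : nat).
Local Notation C := (complex R).

(* The system L = (L_1,..,L_r) of linear functionals on Laurent polynomials is
   given by its moments:  mom j k = L_j[w^k]  (k : int). *)
Variable mom : 'I_r -> int -> C.

Definition cL (k : int) (j : 'I_r) : C := mom j (- k).

Definition msum (n : 'I_r -> nat) : nat := (\sum_(l < r) n l)%N.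

Definition maddE (n : 'I_r -> nat) (j : 'I_r) : 'I_r -> nat :=
  fun l => (n l + (l == j))%N.
Definition msubE (n : 'I_r -> nat) (j : 'I_r) : 'I_r -> nat :=
  fun l => (n l - (l == j))%N.

Definition krange (n m : 'I_r -> nat) (j : 'I_r) : seq int :=
  [seq (i%:Z - (m j)%:Z) | i <- iota 0 (n j + m j)].

(* The rows of T_{n;m}, ordered by j then increasing k; a row (j,k) has
   entry c_{k-i,j} in column i (i = -|m|,...,|n|-1, the column t : 'I_(|n|+|m|)
   corresponding to i = t - |m|). *)
Definition Trows (n m : 'I_r -> nat) : seq ('I_(msum n + msum m) -> C) :=
  flatten [seq [seq (fun t : 'I_(msum n + msum m) =>
                        cL (k - (t%:Z - (msum m)%:Z)) j) | k <- krange n m j]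
          | j <- enum 'I_r].

Definition Tmat (n m : 'I_r -> nat) : 'M[C]_(msum n + msum m) :=
  \matrix_(s, t) (nth (fun _ => 0) (Trows n m) s) t.

(* (n;m) normal for L. For n = m = 0, T is the empty matrix, with det = 1. *)
Definition normalL (n m : 'I_r -> nat) : bool := \det (Tmat n m) != 0.

(* A Laurent polynomial in span{z^k : -|m| <= k <= |n|} is given by its
   coefficients phi t (t < |n|+|m|+1), phi t being the coefficient of z^(t-|m|). *)
Definition lcoef_ty (n m : 'I_r -> nat) := 'I_(msum n + msum m).+1 -> C.

Definition leval (n m : 'I_r -> nat) (phi : lcoef_ty n m) (z : C) : C :=
  \sum_(t < (msum n + msum m).+1) phi t * z ^ (t%:Z - (msum m)%:Z).

Definition Lapp (n m : 'I_r -> nat) (phi : lcoef_ty n m) (j : 'I_r) (k : int) : C :=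
  \sum_(t < (msum n + msum m).+1) phi t * mom j (t%:Z - (msum m)%:Z - k).

Definition isPhi (n m : 'I_r -> nat) (phi : lcoef_ty n m) : Prop :=
  phi ord_max = 1 /\
  forall (j : 'I_r) (k : int), k \in krange n m j -> Lapp phi j k = 0.

Definition alphaPhi (n m : 'I_r -> nat) (phi : lcoef_ty n m) : C := phi ord0.

(* M_j[x^k] = L_j[(w + w^{-1})^k] = sum_i binom(k,i) L_j[w^{2i-k}] *)
Definition momM (j : 'I_r) (k : nat) : C :=
  \sum_(i < k.+1) 'C(k, i)%:R * mom j ((2 * i)%N%:Z - k%:Z).

Definition Mapp (j : 'I_r) (p : {poly C}) : C :=
  \sum_(i < size p) p`_i * momM j i.

Definition isMOP (n : 'I_r -> nat) (P : {poly C}) : Prop :=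
  size P = (msum n).+1 /\ lead_coef P = 1 /\
  forall (j : 'I_r) (k : nat), (k < n j)%N -> Mapp j (P * 'X^k) = 0.

Definition normalM (n : 'I_r -> nat) : Prop := exists! P, isMOP n P.

Definition perfectM : Prop := forall n : 'I_r -> nat, normalM n.

End Defs.

Arguments lcoef_ty {R r} n m.
Arguments leval {R r} n m phi z.
Arguments Lapp {R r} mom n m phi j k.
Arguments isPhi {R r} mom n m phi.
Arguments alphaPhi {R r} n m phi.
Arguments isMOP {R r} mom n P.
Arguments normalL {R r} mom n m.

(* Main.v *)
Require Import Defs.
From HB Require Import structures.
From mathcomp Require Import all_boot all_order all_algebra.
From mathcomp Require Import complex.
From mathcomp Require Import zify ring.
Import Order.TTheory GRing.Theory Num.Theory.
Local Open Scope ring_scope.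

Set Implicit Arguments. Unset Strict Implicit. Unset Printing Implicit Defensive.


Section Gen.
Variable R : rcfType.
Local Notation C := (complex R).
Implicit Types (p q Q : {poly C}) (f : nat -> C) (c z : C).

Definition LS (f : nat -> C) (p : {poly C}) : C := \sum_(i < size p) p`_i * f i.

Lemma LS_wide f p B : (size p <= B)%N -> LS f p = \sum_(i < B) p`_i * f i.
Proof.
move=> le; rewrite /LS (big_ord_widen B (fun i => p`_i * f i)) // big_mkcond /=.
by apply: eq_bigr => i _; case: ltnP => // h; rewrite nth_default ?mul0r.
Qed.

Lemma LSD f p q : LS f (p + q) = LS f p + LS f q.
Proof.
set B := maxn (size p) (size q).
rewrite !(@LS_wide _ _ B) ?leq_maxl ?leq_maxr ?(leq_trans (size_polyD _ _)) //.
by rewrite -big_split; apply: eq_bigr => i _; rewrite coefD mulrDl.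
Qed.

Lemma LSZ f c p : LS f (c *: p) = c * LS f p.
Proof.
rewrite !(@LS_wide _ _ (size p)) ?size_scale_leq // mulr_sumr.
by apply: eq_bigr => i _; rewrite coefZ mulrA.
Qed.

Lemma LS0 f : LS f 0 = 0.
Proof. by rewrite /LS size_poly0 big_ord0. Qed.

Lemma LSN f p : LS f (- p) = - LS f p.
Proof. by rewrite -scaleN1r LSZ mulN1r. Qed.

Lemma LSB f p q : LS f (p - q) = LS f p - LS f q.
Proof. by rewrite LSD LSN. Qed.

Lemma LS_sum f n (F : 'I_n -> {poly C}) :
  LS f (\sum_(i < n) F i) = \sum_(i < n) LS f (F i).
Proof.
exact: (big_morph _ (LSD f) (LS0 f)).
Qed.

Lemma LS_MXn f p a : LS f (p * 'X^a) = LS (fun i => f (a + i)%N) p.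
Proof.
case: (eqVneq p 0) => [->|p0]; first by rewrite mul0r !LS0.
rewrite (@LS_wide _ _ (a + size p)) ?size_mulXn // big_split_ord /=.
rewrite big1 ?add0r => [|i _]; last by rewrite coefMXn /= ltn_ord mul0r.
by apply: eq_bigr => i _; rewrite coefMXn ltnNge leq_addr /= addKn.
Qed.

Lemma LS_Xn f e : LS f 'X^e = f e.
Proof.
rewrite /LS size_polyXn big_ord_recr /= big1 ?add0r => [|i _].
  by rewrite coefXn eqxx mul1r.
by rewrite coefXn /= (ltn_eqF (ltn_ord i)) mul0r.
Qed.

Lemma LS_poly f n (E : nat -> C) :
  LS f (\poly_(i < n) E i) = \sum_(i < n) E i * f i.
Proof.
rewrite (@LS_wide _ _ n) ?size_poly //.
by apply: eq_bigr => i _; rewrite coef_poly ltn_ord.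
Qed.

Lemma LS_ext f g p : (forall i, f i = g i) -> LS f p = LS g p.
Proof. by move=> h; apply: eq_bigr => i _; rewrite h. Qed.

Lemma LS_mul f p q B : (size q <= B)%N ->
  LS f (p * q) = \sum_(b < B) q`_b * LS (fun i => f (b + i)%N) p.
Proof.
move=> hq.
have -> : p * q = \sum_(b < B) q`_b *: (p * 'X^b).
  rewrite -{1}(coefK q) poly_def mulr_sumr.
  rewrite (big_ord_widen B (fun b => p * (q`_b *: 'X^b))) // big_mkcond /=.
  apply: eq_bigr => i _; case: ltnP => h; first by rewrite scalerAr.
  by rewrite nth_default // scale0r.
by rewrite LS_sum; apply: eq_bigr => b _; rewrite LSZ LS_MXn.
Qed.

Lemma poly_eval_eq (p q : {poly C}) :
  (forall z : C, z != 0 -> p.[z] = q.[z]) -> p = q.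
Proof.
move=> h; apply/eqP; rewrite -subr_eq0; apply/negPn/negP => hs.
set s := p - q in hs.
suff : (size [seq (i.+1)%:R : C | i <- iota 0 (size s)] < size s)%N.
  by rewrite size_map size_iota ltnn.
apply: max_poly_roots hs _ _.
  apply/allP => x /mapP [i _ ->]; rewrite /root /s hornerD hornerN h ?subrr //.
  by rewrite pnatr_eq0.
rewrite map_inj_uniq ?iota_uniq // => a b /eqP; rewrite eqr_nat => /eqP [].
by [].
Qed.

Definition rfl (D : nat) (p : {poly C}) : {poly C} := \poly_(i < D.+1) p`_(D - i).

Lemma coef_rfl D p i : (rfl D p)`_i = if (i <= D)%N then p`_(D - i) else 0.
Proof. by rewrite coef_poly ltnS. Qed.

Lemma size_rfl D p : (size (rfl D p) <= D.+1)%N.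
Proof. exact: size_poly. Qed.

Lemma LS_rfl f D p : (size p <= D.+1)%N -> LS f (rfl D p) = LS (fun i => f (D - i)%N) p.
Proof.
move=> h; rewrite LS_poly (LS_wide _ h) (reindex_inj rev_ord_inj) /=.
apply: eq_bigr => i _; rewrite subSS subKn // -ltnS //.
Qed.

Lemma rfl_rfl D p : (size p <= D.+1)%N -> rfl D (rfl D p) = p.
Proof.
move=> h; apply/polyP => i; rewrite !coef_rfl.
case: leqP => hi; first by rewrite leq_subr subKn.
by rewrite nth_default // (leq_trans h).
Qed.

Lemma rflB D p q c : rfl D (p - c *: q) = rfl D p - c *: rfl D q.
Proof.
apply/polyP => i; rewrite coefB coefZ !coef_rfl coefB coefZ.
by case: ifP => _ //; rewrite mulr0 subr0.
Qed.

Lemma rflD D p q : rfl D (p + q) = rfl D p + rfl D q.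
Proof.
apply/polyP => i; rewrite coefD !coef_rfl coefD.
by case: ifP => _ //; rewrite addr0.
Qed.

Lemma rfl_eval D p z : (size p <= D.+1)%N -> z != 0 ->
  (rfl D p).[z] = z ^+ D * p.[z^-1].
Proof.
move=> h z0; rewrite horner_poly (horner_coef_wide _ h) mulr_sumr.
rewrite (reindex_inj rev_ord_inj) /=.
apply: eq_bigr => i _; have hi : (i <= D)%N by rewrite -ltnS.
rewrite subSS subKn // exprB ?unitfE // exprVn; ring.
Qed.

Definition uP : {poly C} := 'X^2 + 1%:P.

Definition Tp (d : nat) (Q : {poly C}) : {poly C} :=
  \sum_(i < d.+1) Q`_i *: ('X^(d - i) * uP ^+ i).

Lemma Tp_eval d Q z : (size Q <= d.+1)%N -> z != 0 ->
  (Tp d Q).[z] = z ^+ d * Q.[z + z^-1].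
Proof.
move=> h z0; rewrite horner_sum (horner_coef_wide _ h) mulr_sumr.
apply: eq_bigr => i _.
rewrite hornerZ hornerM hornerXn horner_exp /uP hornerD hornerXn hornerC.
have e : z ^+ 2 + 1 = z * (z + z^-1) by rewrite mulrDr mulfV // expr2.
have hi : (i <= d)%N by rewrite -ltnS.
have ez : z ^+ d = z ^+ (d - i) * z ^+ i by rewrite -exprD subnK.
rewrite e exprMn ez; ring.
Qed.

Lemma uP_eval z : uP.[z] = z ^+ 2 + 1.
Proof. by rewrite /uP hornerD hornerXn hornerC. Qed.

Lemma size_uPn k : size (uP ^+ k) = (k + k).+1.
Proof.
have m : uP \is monic by rewrite /uP monicXnaddC.
have := size_exp uP k; rewrite /uP size_XnaddC //= => e.
rewrite -[LHS]prednK ?e; first by congr S; lia.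
by rewrite lt0n size_poly_eq0 monic_neq0 // monic_exp.
Qed.

Lemma uPn_top k : (uP ^+ k)`_(k + k) = 1.
Proof.
have m : uP \is monic by rewrite /uP monicXnaddC.
by have := monicP (monic_exp k m); rewrite /lead_coef size_uPn.
Qed.

Lemma uPn_0 k : (uP ^+ k)`_0 = 1.
Proof. by rewrite -horner_coef0 horner_exp uP_eval expr0n /= add0r expr1n. Qed.

Lemma Tp_XMn d k Q : (size Q <= d.+1)%N ->
  Tp (d + k) (Q * 'X^k) = Tp d Q * uP ^+ k.
Proof.
move=> h; apply: poly_eval_eq => z z0.
rewrite Tp_eval //; last by rewrite (leq_trans (size_polyMleq _ _)) // size_polyXn; lia.
rewrite !hornerM Tp_eval // hornerXn horner_exp uP_eval.
have e : z ^+ 2 + 1 = z * (z + z^-1) by rewrite mulrDr mulfV // expr2.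
rewrite e exprMn exprD; ring.
Qed.

Lemma rfl_uPn k : rfl (k + k) (uP ^+ k) = uP ^+ k.
Proof.
apply: poly_eval_eq => z z0; rewrite rfl_eval ?size_uPn //.
rewrite !horner_exp !uP_eval.
have -> : z ^+ (k + k) = (z ^+ 2) ^+ k by rewrite -exprM; congr (_ ^+ _); lia.
rewrite -exprMn; congr (_ ^+ _).
by rewrite mulrDr mulr1 -exprMn mulfV // expr1n addrC.
Qed.

End Gen.

Unset Implicit Arguments. Set Strict Implicit.



Section Main.
Variables (R : rcfType) (r : nat).
Local Notation C := (complex R).
Implicit Types (p q Q : {poly C}) (f : nat -> C) (c z : C).
Variable mom : 'I_r -> int -> C.
Hypothesis hsym : forall (j : 'I_r) (k : nat), mom j k%:Z = mom j (- k%:Z).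

Lemma msym j x : mom j x = mom j (- x).
Proof.
case: x => k; first exact: hsym.
by rewrite NegzE opprK; symmetry; apply: hsym.
Qed.

Definition Lf j (s : int) p := LS (fun i => mom j (i%:Z - s)) p.

Lemma LS_ext_in f g p : (forall i, (i < size p)%N -> f i = g i) -> LS f p = LS g p.
Proof. by move=> h; apply: eq_bigr => i _; rewrite h. Qed.

Lemma Lf_rfl j s D p : (size p <= D.+1)%N -> Lf j s (rfl D p) = Lf j (D%:Z - s) p.
Proof.
move=> h; rewrite /Lf LS_rfl //; apply: LS_ext_in => i hi.
rewrite msym; congr (mom _ _).
have : (i <= D)%N by rewrite -ltnS (leq_trans hi).
lia.
Qed.

Lemma Lf_MXn j s p a : Lf j s (p * 'X^a) = Lf j (s - a%:Z) p.
Proof. rewrite /Lf LS_MXn; apply: LS_ext => i; congr (mom _ _); lia. Qed.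

Lemma Lf_mul j s p q B : (size q <= B)%N ->
  Lf j s (p * q) = \sum_(b < B) q`_b * Lf j (s - b%:Z) p.
Proof.
move=> h; rewrite /Lf (LS_mul _ _ h); apply: eq_bigr => b _; congr (_ * _).
apply: LS_ext => i; congr (mom _ _); lia.
Qed.

Lemma LS_muln f p n : LS f (p *+ n) = n%:R * LS f p.
Proof. by rewrite -scaler_nat LSZ. Qed.

Lemma momM_L j i : momM mom j i = Lf j i%:Z (uP R ^+ i).
Proof.
rewrite /uP polyC1 exprD1n /Lf LS_sum; apply: eq_bigr => a _.
by rewrite LS_muln -exprM LS_Xn.
Qed.

Lemma Mapp_T j d Q : (size Q <= d.+1)%N -> Mapp mom j Q = Lf j d%:Z (Tp d Q).
Proof.
move=> h; rewrite /Mapp /Tp /Lf LS_sum.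
have -> : \sum_(i < size Q) Q`_i * momM mom j i = LS (momM mom j) Q by [].
rewrite (LS_wide _ h); apply: eq_bigr => i _.
rewrite LSZ; congr (_ * _); rewrite mulrC -/(Lf _ _ _) Lf_MXn momM_L.
have hi : (i <= d)%N by rewrite -ltnS.
congr (Lf _ _ _); lia.
Qed.

Lemma Mapp_XT j d k Q : (size Q <= d.+1)%N ->
  Mapp mom j (Q * 'X^k) =
  \sum_(b < (k + k).+1) (uP R ^+ k)`_b * Lf j ((d + k)%N%:Z - b%:Z) (Tp d Q).
Proof.
move=> h.
rewrite (@Mapp_T _ (d + k)); last first.
  by rewrite (leq_trans (size_polyMleq _ _)) // size_polyXn; lia.
by rewrite Tp_XMn // (@Lf_mul j _ _ _ (k + k).+1) // size_uPn.
Qed.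

Definition condM (n : 'I_r -> nat) Q :=
  forall l k, (k < n l)%N -> Mapp mom l (Q * 'X^k) = 0.

Definition SC (n : 'I_r -> nat) (N : nat) p :=
  forall l (e : int), - (n l)%:Z < e -> e < (n l)%:Z -> Lf l (N%:Z + e) p = 0.

Lemma LtoM n d Q : (size Q <= d.+1)%N -> SC n d (Tp d Q) -> condM n Q.
Proof.
move=> h hS l k hk; rewrite (@Mapp_XT l d) // big1 // => b _.
have hb := ltn_ord b.
have -> : ((d + k)%N%:Z - b%:Z) = d%:Z + (k%:Z - b%:Z) by lia.
by rewrite hS ?mulr0 //; lia.
Qed.

Lemma Lf_sym j s D p : (size p <= D.+1)%N -> rfl D p = p ->
  Lf j s p = Lf j (D%:Z - s) p.
Proof. by move=> h e; rewrite -{1}e Lf_rfl. Qed.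

Lemma MtoL_top l d k Q Psi : (size Q <= d.+1)%N -> Tp d Q = Psi ->
  (size Psi <= (d + d).+1)%N -> rfl (d + d) Psi = Psi ->
  Mapp mom l (Q * 'X^k) = 0 ->
  (forall e : int, - k%:Z < e -> e < k%:Z -> Lf l (d%:Z + e) Psi = 0) ->
  Lf l (d%:Z + k%:Z) Psi = 0.
Proof.
move=> hQ eT hP hs hM hS.
move: hM; rewrite (@Mapp_XT l d) // eT.
case: k hS => [|k] hS.
  rewrite big_ord1 /= uPn_0 mul1r.
  by have -> : ((d + 0)%N%:Z - 0%:Z) = d%:Z + 0%:Z by lia.
rewrite (bigD1 ord0) // (bigD1 ord_max) //= big1; last first.
  move=> b /andP [b0 bm].
  have hb := ltn_ord b.
  have b0' : (0 < b)%N by rewrite lt0n; apply: contraNneq b0 => e; apply/eqP/val_inj.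
  have bm' : (b < k.+1 + k.+1)%N.
    by rewrite ltn_neqAle -ltnS hb andbT; apply: contraNneq bm => e; apply/eqP/val_inj.
  have -> : ((d + k.+1)%N%:Z - b%:Z) = d%:Z + (k.+1%:Z - b%:Z) by lia.
  by rewrite hS ?mulr0 //; lia.
rewrite !addr0 uPn_0 uPn_top !mul1r.
rewrite [X in _ + X = _](@Lf_sym l _ _ _ hP hs).
have -> : ((d + d)%N%:Z - ((d + k.+1)%N%:Z - (k.+1 + k.+1)%N%:Z)) = (d + k.+1)%N%:Z by lia.
move/eqP; rewrite -mulr2n -mulr_natr mulf_eq0 pnatr_eq0 orbF => /eqP.
by have -> : (d + k.+1)%N%:Z = d%:Z + k.+1%:Z by lia.
Qed.

End Main.
Arguments Lf {R r} mom j s p.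
Arguments condM {R r} mom n Q.
Arguments SC {R r} mom n N p.
Arguments msym {R r mom} hsym j x.
Arguments Lf_rfl {R r mom} hsym j s D p _.
Arguments Lf_sym {R r mom} hsym j s D p _ _.
Arguments Lf_MXn {R r} mom j s p a.
Arguments Mapp_T {R r} mom j d Q _.
Arguments LtoM {R r mom} n d Q _ _.
Arguments MtoL_top {R r mom} hsym l d k Q Psi _ _ _ _ _ _.


Section Sym.
Variable R : rcfType.
Local Notation C := (complex R).
Implicit Types (p q Q : {poly C}) (f : nat -> C) (c z : C).

Lemma sym_T d p : (size p <= (d + d).+1)%N -> rfl (d + d) p = p ->
  exists Q, [/\ (size Q <= d.+1)%N, Q`_d = p`_(d + d) & Tp d Q = p].
Proof.
elim: d p => [|d IH] p hs hr.
  exists p; split => //.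
  by rewrite {2}(size1_polyC hs) /Tp big_ord1 /= expr0 mulr1 alg_polyC.
pose c := p`_(d.+1 + d.+1).
pose p1 := p - c *: uP R ^+ d.+1.
have hp1s : (size p1 <= (d.+1 + d.+1).+1)%N.
  rewrite /p1 (leq_trans (size_polyD _ _)) // geq_max hs size_polyN.
  by rewrite (leq_trans (size_scale_leq _ _)) // size_uPn.
have hp1D : p1`_(d.+1 + d.+1) = 0 by rewrite /p1 coefB coefZ uPn_top mulr1 subrr.
have hp1r : rfl (d.+1 + d.+1) p1 = p1 by rewrite /p1 rflB hr rfl_uPn.
have hp1c i : (i <= d.+1 + d.+1)%N -> p1`_i = p1`_(d.+1 + d.+1 - i).
  by move=> hi; rewrite -{1}hp1r coef_rfl hi.
have hp10 : p1`_0 = 0 by rewrite hp1c // subn0.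
pose p2 := \poly_(i < (d + d).+1) p1`_i.+1.
have e12 : p1 = p2 * 'X.
  apply/polyP => i; rewrite coefMX; case: i => [|i] //=.
  rewrite coef_poly; case: ltnP => hi //.
  case: (eqVneq i.+1 (d.+1 + d.+1)) => [->|ne] //.
  by apply: nth_default; apply: leq_trans hp1s _; lia.
have hp2r : rfl (d + d) p2 = p2.
  apply/polyP => i; rewrite coef_rfl !coef_poly.
  case: (leqP i (d + d)) => hi; last by rewrite ltnS leqNgt hi.
  rewrite ltnS leq_subr ltnS hi hp1c; last by lia.
  by congr (p1`_ _); lia.
have [Q2 [hQ2s hQ2d hQ2T]] := IH p2 (size_poly _ _) hp2r.
exists (Q2 + c *: 'X^(d.+1)); split.
- rewrite (leq_trans (size_polyD _ _)) // geq_max (leq_trans hQ2s) //.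
  by rewrite (leq_trans (size_scale_leq _ _)) // size_polyXn.
- by rewrite coefD coefZ coefXn eqxx mulr1 nth_default // add0r.
rewrite /Tp big_ord_recr /= coefD coefZ coefXn eqxx mulr1 nth_default //.
rewrite add0r subnn expr0 mul1r.
have -> : \sum_(i < d.+1) (Q2 + c *: 'X^(d.+1))`_i *: ('X^(d.+1 - i) * uP R ^+ i)
   = Tp d Q2 * 'X.
  rewrite /Tp mulr_suml; apply: eq_bigr => i _.
  rewrite coefD coefZ coefXn (ltn_eqF (ltn_ord i)) mulr0 addr0.
  have hi : (i <= d)%N by rewrite -ltnS.
  rewrite subSn // exprSr -scalerAl; congr (_ *: _); rewrite mulrAC //.
by rewrite hQ2T -e12 /p1 subrK.
Qed.

End Sym.


Section Mat.
Variables (R : rcfType) (r : nat).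
Local Notation C := (complex R).
Implicit Types (p q Q : {poly C}) (f : nat -> C) (c z : C).
Variable mom : 'I_r -> int -> C.
Hypothesis hr : (0 < r)%N.
Implicit Types (n m : 'I_r -> nat) (j l : 'I_r) (k : int).

Definition rowsJK (n m : 'I_r -> nat) : seq ('I_r * int) :=
  flatten [seq [seq (j, k) | k <- krange n m j] | j <- enum 'I_r].

Lemma Trows_eq n m : Trows mom n m =
  [seq (fun t : 'I_(msum n + msum m) => cL mom (jk.2 - (t%:Z - (msum m)%:Z)) jk.1)
  | jk <- rowsJK n m].
Proof.
rewrite /Trows /rowsJK; elim: (enum 'I_r) => //= j s IH.
by rewrite map_cat IH -map_comp.
Qed.

Lemma size_krange n m j : size (krange n m j) = (n j + m j)%N.
Proof. by rewrite /krange size_map size_iota. Qed.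

Lemma size_rowsJK n m : size (rowsJK n m) = (msum n + msum m)%N.
Proof.
rewrite /rowsJK size_flatten /shape -map_comp sumnE big_map big_enum /=.
rewrite /msum -big_split /=; apply: eq_bigr => j _ /=.
by rewrite size_map size_krange.
Qed.

Lemma mem_rowsJK n m l k : ((l, k) \in rowsJK n m) = (k \in krange n m l).
Proof.
apply/flattenP/idP.
  move=> [s /mapP [j _ ->] /mapP [k' hk' [-> ->]]] //.
move=> hk; exists [seq (l, k) | k <- krange n m l].
  by apply/mapP; exists l; rewrite ?mem_enum.
by apply/mapP; exists k.
Qed.

Lemma mem_krange n m l k :
  (k \in krange n m l) = (- (m l)%:Z <= k) && (k < (n l)%:Z).
Proof.
apply/mapP/idP.
  move=> [x]; rewrite mem_iota add0n; move=> /andP [_ hi] ->; apply/andP; split; lia.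
move=> /andP [h1 h2]; exists (absz (k + (m l)%:Z)); last by lia.
rewrite mem_iota add0n; apply/andP; split; lia.
Qed.

Definition jk0 : 'I_r * int := (Ordinal hr, 0).

Definition condLL (n m : 'I_r -> nat) (N : nat) p :=
  forall l k, k \in krange n m l -> Lf mom l (N%:Z + k) p = 0.

Lemma Tmat_row n m (s : 'I_(msum n + msum m)) (t : 'I_(msum n + msum m)) :
  Tmat mom n m s t =
  mom (nth jk0 (rowsJK n m) s).1
      (t%:Z - ((msum m)%:Z + (nth jk0 (rowsJK n m) s).2)).
Proof.
rewrite mxE Trows_eq (nth_map jk0) ?size_rowsJK //= /cL.
by congr (mom _ _); lia.
Qed.

Lemma kerL n m p : normalL mom n m -> (size p <= msum n + msum m)%N ->
  condLL n m (msum m) p -> p = 0.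
Proof.
move=> hN hs hc.
set D := (msum n + msum m)%N.
have hu : Tmat mom n m \in unitmx by rewrite unitmxE unitfE.
pose v : 'cV[C]_D := \col_t p`_t.
have Tv : Tmat mom n m *m v = 0.
  apply/matrixP => s i0; rewrite !mxE.
  have hs' : (s < size (rowsJK n m))%N by rewrite size_rowsJK.
  have hmem := mem_nth jk0 hs'.
  move: hmem; case e: (nth jk0 (rowsJK n m) s) => [l k].
  rewrite mem_rowsJK => hk.
  transitivity (Lf mom l ((msum m)%:Z + k) p); last exact: hc l k hk.
  rewrite /Lf (LS_wide _ hs); apply: eq_bigr => t _.
  by rewrite Tmat_row e mxE mulrC.
have v0 : v = 0 by rewrite -(mulKmx hu v) Tv mulmx0.
apply/polyP => i; rewrite coef0.
case: (ltnP i D) => hi; last by rewrite nth_default // (leq_trans hs).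
by have := congr1 (fun A : 'cV[C]_D => A (Ordinal hi) 0) v0; rewrite !mxE.
Qed.

Lemma exL n m : normalL mom n m ->
  exists p, [/\ (size p <= (msum n + msum m).+1)%N,
     p`_(msum n + msum m) = 1 & condLL n m (msum m) p].
Proof.
move=> hN.
set D := (msum n + msum m)%N.
have hu : Tmat mom n m \in unitmx by rewrite unitmxE unitfE.
pose b : 'cV[C]_D := \col_s (mom (nth jk0 (rowsJK n m) s).1
      (D%:Z - ((msum m)%:Z + (nth jk0 (rowsJK n m) s).2))).
pose v := invmx (Tmat mom n m) *m (- b).
have Tv : Tmat mom n m *m v = - b by rewrite /v mulKVmx.
pose sP := \sum_(t < D) v t 0 *: 'X^t.
have hsP i : (D <= i)%N -> sP`_i = 0.
  move=> hi; rewrite /sP coef_sum big1 // => t _.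
  by rewrite coefZ coefXn eq_sym (ltn_eqF (leq_trans (ltn_ord t) hi)) mulr0.
exists ('X^D + sP); split.
- rewrite (leq_trans (size_polyD _ _)) // geq_max size_polyXn leqnn /=.
  by apply/leq_sizeP => i hi; rewrite hsP // ltnW.
- by rewrite coefD coefXn eqxx hsP // addr0.
move=> l k hk.
rewrite /Lf LSD LS_Xn /sP LS_sum.
have hin : (l, k) \in rowsJK n m by rewrite mem_rowsJK.
set s0 := index (l, k) (rowsJK n m).
have hs0 : (s0 < D)%N by rewrite /s0 /D -size_rowsJK index_mem.
have hnth : nth jk0 (rowsJK n m) s0 = (l, k) by rewrite nth_index.
have := congr1 (fun A : 'cV[C]_D => A (Ordinal hs0) 0) Tv.
rewrite !mxE /= hnth /= => e.
have -> : \sum_(i < D) LS (fun i0 : nat => mom l (i0%:Z - ((msum m)%:Z + k))) (v i 0 *: 'X^i)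
   = \sum_(j < D) Tmat mom n m (Ordinal hs0) j * v j 0.
  apply: eq_bigr => t _; rewrite LSZ LS_Xn Tmat_row /= hnth /= mulrC //.
by rewrite e addrN.
Qed.

End Mat.
Arguments condLL {R r} mom n m N p.
Arguments kerL {R r mom} hr {n m p} _ _ _.
Arguments exL {R r mom} hr {n m} _.
Arguments mem_krange {r} hr {n m l k}.


Section Final.
Variables (R : rcfType) (r : nat).
Local Notation C := (complex R).
Implicit Types (p q Q : {poly C}) (f : nat -> C) (c z : C).
Variable mom : 'I_r -> int -> C.
Hypothesis hr : (0 < r)%N.
Hypothesis hsym : forall (j : 'I_r) (k : nat), mom j k%:Z = mom j (- k%:Z).
Hypothesis hnn : forall n : 'I_r -> nat, normalL mom n n.
Hypothesis hnS : forall (n : 'I_r -> nat) (j : 'I_r), normalL mom (maddE n j) n.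
Implicit Types (n m : 'I_r -> nat) (j l : 'I_r) (k : int).

Lemma msum_add n j : msum (maddE n j) = (msum n).+1.
Proof.
rewrite /msum /maddE big_split /=.
have -> : (\sum_(l < r) (l == j : nat))%N = 1%N.
  by rewrite (bigD1 j) //= eqxx big1 ?addn0 // => l /negbTE ->.
by rewrite addn1.
Qed.

Lemma msum_sub n j : (0 < n j)%N -> msum n = (msum (msubE n j)).+1.
Proof.
move=> hj; rewrite -(msum_add _ j) /msum; apply: eq_bigr => l _.
rewrite /maddE /msubE; case: eqVneq => [->|] /=; lia.
Qed.

Definition psi N p := p + rfl (N + N) p.

Lemma size_psi N p : (size p <= (N + N).+1)%N -> (size (psi N p) <= (N + N).+1)%N.
Proof.
by move=> h; rewrite (leq_trans (size_polyD _ _)) // geq_max h size_rfl.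
Qed.

Lemma rfl_psi N p : (size p <= (N + N).+1)%N -> rfl (N + N) (psi N p) = psi N p.
Proof. by move=> h; rewrite /psi rflD rfl_rfl // addrC. Qed.

Lemma Lf_psi N p l s : (size p <= (N + N).+1)%N ->
  Lf mom l s (psi N p) = Lf mom l s p + Lf mom l ((N + N)%N%:Z - s) p.
Proof. by move=> h; rewrite /psi /Lf LSD; congr (_ + _); exact: (Lf_rfl hsym _ _ _ _ h). Qed.

Lemma coef_psi N p : (psi N p)`_(N + N) = p`_(N + N) + p`_0.
Proof. by rewrite /psi coefD coef_rfl leqnn subnn. Qed.

Lemma SC_psi n m N p : (forall l, (n l <= (m l).+1)%N) ->
  (size p <= (N + N).+1)%N -> condLL mom n m N p -> SC mom n N (psi N p).
Proof.
move=> hnm hs hc l e h1 h2; rewrite Lf_psi //.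
have hl := hnm l.
rewrite hc; last by rewrite (mem_krange hr); apply/andP; split; lia.
have -> : ((N + N)%N%:Z - (N%:Z + e)) = N%:Z + (- e) by lia.
by rewrite hc ?addr0 // (mem_krange hr); apply/andP; split; lia.
Qed.

Lemma Q_of n m N p : (forall l, (n l <= (m l).+1)%N) ->
  (size p <= (N + N).+1)%N -> condLL mom n m N p ->
  exists Q, [/\ (size Q <= N.+1)%N, Q`_N = p`_(N + N) + p`_0,
     Tp N Q = psi N p & condM mom n Q].
Proof.
move=> hnm hs hc.
have [Q [hQs hQN hQT]] := @sym_T R N (psi N p) (size_psi _ _ hs) (rfl_psi _ _ hs).
exists Q; split => //; first by rewrite hQN coef_psi.
apply: (LtoM _ _ _ hQs); rewrite hQT; exact: SC_psi.
Qed.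

Lemma condM_lin n Q1 Q2 c : condM mom n Q1 -> condM mom n Q2 ->
  condM mom n (Q1 - c *: Q2).
Proof.
move=> h1 h2 l k hk; rewrite mulrBl -scalerAl.
have -> : Mapp mom l (Q1 * 'X^k - c *: (Q2 * 'X^k)) =
   LS (momM mom l) (Q1 * 'X^k - c *: (Q2 * 'X^k)) by [].
rewrite LSB LSZ.
have e1 : LS (momM mom l) (Q1 * 'X^k) = 0 by exact: h1.
have e2 : LS (momM mom l) (Q2 * 'X^k) = 0 by exact: h2.
by rewrite e1 e2 mulr0 subr0.
Qed.

Lemma size_drop_top N Q : (size Q <= N.+1)%N -> Q`_N = 0 -> (size Q <= N)%N.
Proof.
move=> h e; apply/leq_sizeP => i hi.
case: (eqVneq i N) => [-> //|ne]; rewrite nth_default //.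
by apply: leq_trans h _; lia.
Qed.

Lemma edge l N (ml : nat) p :
  ((0 < ml)%N -> Lf mom l (N%:Z + (- ml%:Z)) p = 0) ->
  Lf mom l (N%:Z + ml%:Z) p + Lf mom l ((N + N)%N%:Z - (N%:Z + ml%:Z)) p = 0 ->
  Lf mom l (N%:Z + ml%:Z) p = 0.
Proof.
move=> h.
have -> : ((N + N)%N%:Z - (N%:Z + ml%:Z)) = N%:Z + (- ml%:Z) by lia.
case: ml h => [|ml] h.
  rewrite oppr0 addr0 => /eqP; rewrite -mulr2n -mulr_natr mulf_eq0 pnatr_eq0 orbF.
  by move/eqP.
by rewrite h // addr0.
Qed.

Definition uniqM n := forall Q, (size Q <= msum n)%N -> condM mom n Q -> Q = 0.

Lemma Tp0 d : Tp d (0 : {poly C}) = 0.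
Proof. by rewrite /Tp big1 // => i _; rewrite coef0 scale0r. Qed.

Lemma alpha_ne n p : uniqM n -> (size p <= (msum n + msum n).+1)%N ->
  p`_(msum n + msum n) = 1 -> condLL mom n n (msum n) p -> 1 + p`_0 != 0.
Proof.
move=> hu hs h1 hc; apply/negP => /eqP h0.
set N := msum n in hs h1 hc.
have [Q [hQs hQN hQT hQM]] := @Q_of n n N p (fun l => leqnSn _) hs hc.
have hQs' : (size Q <= N)%N by apply: size_drop_top => //; rewrite hQN h1.
have Q0 := hu Q hQs' hQM.
move: hQT; rewrite Q0 Tp0 => hpsi.
pose j0 := Ordinal hr.
have hedge l : Lf mom l (N%:Z + (n l)%:Z) p = 0.
  apply: edge.
    by move=> hl; apply: hc; rewrite (mem_krange hr); apply/andP; split; lia.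
  by rewrite -Lf_psi // -hpsi /Lf LS0.
have hc' : condLL mom (maddE n j0) n N p.
  move=> l k; rewrite (mem_krange hr) /maddE => /andP [k1 k2].
  case: (ltP k (n l)%:Z) => hk.
    by apply: hc; rewrite (mem_krange hr); apply/andP; split.
  have -> : k = (n l)%:Z by move: k2; case: (l == j0) => /=; lia.
  exact: hedge.
have hs' : (size p <= msum (maddE n j0) + msum n)%N by rewrite msum_add; lia.
have := kerL hr (hnS n j0) hs' hc'.
by move=> p0; move: h1; rewrite p0 coef0 => /eqP; rewrite eq_sym oner_eq0.
Qed.

Lemma uniq_all n : uniqM n.
Proof.
suff H : forall N n, msum n = N -> uniqM n by exact: H.
elim => [|N IH] {}n hn Q hQs hQM.
  by apply/eqP; rewrite -size_poly_eq0 -leqn0 -hn.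
have [j hj] : exists j, (0 < n j)%N.
  case: (pickP (fun j => (0 < n j)%N)) => [j hj|h]; first by exists j.
  move: hn; rewrite /msum big1 // => l _; by move: (h l); rewrite lt0n => /negbFE /eqP.
set m := msubE n j.
have hm : msum m = N by move: hn; rewrite (msum_sub _ _ hj) => -[].
have IHm := IH m hm.
have [p [hps hp1 hpc]] := exL hr (hnn m).
rewrite hm in hps hp1 hpc.
have ha : 1 + p`_0 != 0 by apply: (@alpha_ne m p IHm); rewrite hm.
have [Qm [hQms hQmN hQmT hQmM]] := @Q_of m m N p (fun l => leqnSn _) hps hpc.
rewrite hp1 in hQmN.
set c := Q`_N / (1 + p`_0).
have hmn l : (m l <= n l)%N by rewrite /m /msubE leq_subr.
have hQM' : condM mom m Q by move=> l k hk; apply: hQM; apply: leq_trans hk _.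
have e : Q - c *: Qm = 0.
  apply: IHm; last exact: condM_lin.
  rewrite hm; apply: size_drop_top.
    rewrite (leq_trans (size_polyD _ _)) // geq_max size_polyN.
    by rewrite (leq_trans (size_scale_leq _ _)) // -hn hQs.
  by rewrite coefB coefZ hQmN /c divfK // subrr.
have eQ : Q = c *: Qm by apply/eqP; rewrite -subr_eq0 e.
case: (eqVneq c 0) => [c0|c0]; first by rewrite eQ c0 scale0r.
exfalso.
have hM : Mapp mom j (Qm * 'X^(m j)) = 0.
  have hmj : (m j < n j)%N by rewrite /m /msubE eqxx; lia.
  have := hQM j (m j) hmj.
  rewrite eQ -scalerAl.
  have -> : Mapp mom j (c *: (Qm * 'X^(m j))) =
     LS (momM mom j) (c *: (Qm * 'X^(m j))) by [].
  rewrite LSZ => /eqP; rewrite mulf_eq0 (negbTE c0) /= => /eqP //.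
have hSC := @SC_psi m m N p (fun l => leqnSn _) hps hpc.
have hL := MtoL_top hsym j N (m j) Qm (psi N p) hQms hQmT (size_psi _ _ hps) (rfl_psi _ _ hps) hM
   (fun e h1 h2 => hSC j e h1 h2).
rewrite Lf_psi // in hL.
have hedge' : Lf mom j (N%:Z + (m j)%:Z) p = 0.
  apply: (@edge j N (m j) p _ hL) => hl; apply: hpc; rewrite (mem_krange hr); apply/andP; split; lia.
have hc' : condLL mom (maddE m j) m N p.
  move=> l k; rewrite (mem_krange hr) /maddE => /andP [k1 k2].
  case: (ltP k (m l)%:Z) => hk.
    by apply: hpc; rewrite (mem_krange hr); apply/andP; split.
  case: (eqVneq l j) k2 hk => [->|ne] /= k2 hk; last lia.
  have -> : k = (m j)%:Z by lia.
  exact: hedge'.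
have hs' : (size p <= msum (maddE m j) + msum m)%N by rewrite msum_add hm; lia.
have p0 : p = 0 by apply: (kerL hr (hnS m j) hs'); rewrite hm.
by move: hp1; rewrite p0 coef0 => /eqP; rewrite eq_sym oner_eq0.
Qed.

End Final.
Arguments psi {R} N p.


Section Thm.
Variables (R : rcfType) (r : nat).
Local Notation C := (complex R).
Implicit Types (p q Q : {poly C}) (f : nat -> C) (c z : C).
Variable mom : 'I_r -> int -> C.
Hypothesis hr : (0 < r)%N.
Hypothesis hsym : forall (j : 'I_r) (k : nat), mom j k%:Z = mom j (- k%:Z).
Hypothesis hnn : forall n : 'I_r -> nat, normalL mom n n.
Hypothesis hnS : forall (n : 'I_r -> nat) (j : 'I_r), normalL mom (maddE n j) n.
Implicit Types (n m : 'I_r -> nat) (j l : 'I_r) (k : int).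

Definition toP n m (phi : lcoef_ty n m) : {poly C} :=
  \poly_(t < (msum n + msum m).+1) phi (inord t).
Arguments toP {n m} phi.

Lemma toP_prop n m (phi : lcoef_ty n m) : isPhi mom n m phi ->
  [/\ (size (toP phi) <= (msum n + msum m).+1)%N,
      (toP phi)`_(msum n + msum m) = 1,
      (toP phi)`_0 = alphaPhi n m phi &
      condLL mom n m (msum m) (toP phi)].
Proof.
move=> [h1 h2]; split.
- exact: size_poly.
- rewrite coef_poly ltnSn -h1; congr phi; apply: val_inj; rewrite /= inordK //.
- rewrite coef_poly /alphaPhi; congr phi; apply: val_inj; rewrite /= inordK //.
move=> l k hk; rewrite -(h2 l k hk) /Lf /toP LS_poly /Lapp.
apply: eq_bigr => t _; rewrite inord_val; congr (_ * mom _ _); lia.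
Qed.

Arguments toP_prop {n m phi} _.

Lemma leval_toP n m (phi : lcoef_ty n m) z : z != 0 ->
  leval n m phi z = (toP phi).[z] / z ^+ msum m.
Proof.
move=> z0; rewrite /leval /toP horner_poly mulr_suml; apply: eq_bigr => t _.
by rewrite inord_val expfzDr // -exprnN -exprnP mulrA.
Qed.

Lemma condM0 n : condM mom n 0.
Proof. by move=> l k _; rewrite mul0r; exact: (LS0 _). Qed.

Lemma condMZ n Q c : condM mom n Q -> condM mom n (c *: Q).
Proof.
move=> h; have := @condM_lin R r mom n _ _ (- c) (condM0 n) h.
by rewrite sub0r scaleNr opprK.
Qed.

Lemma mop_of n Q : (size Q <= (msum n).+1)%N -> Q`_(msum n) != 0 ->
  condM mom n Q -> isMOP mom n ((Q`_(msum n))^-1 *: Q).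
Proof.
move=> hs ha hc.
have hsz : size Q = (msum n).+1.
  apply/eqP; rewrite eqn_leq hs /= ltnNge; apply/negP => /leq_sizeP h.
  by move: ha; rewrite h ?eqxx.
split; last split.
- by rewrite size_scale ?invr_eq0.
- by rewrite /lead_coef size_scale ?invr_eq0 // hsz coefZ mulVf.
exact: condMZ.
Qed.

Arguments mop_of {n Q} _ _ _.

Lemma mop_uniq n P1 P2 : isMOP mom n P1 -> isMOP mom n P2 -> P1 = P2.
Proof.
move=> [s1 [l1 c1]] [s2 [l2 c2]].
have e1 : P1`_(msum n) = 1 by rewrite -l1 /lead_coef s1.
have e2 : P2`_(msum n) = 1 by rewrite -l2 /lead_coef s2.
have := @uniq_all R r mom hr hsym hnn hnS n (P1 - 1 *: P2).
rewrite scale1r => h; apply/eqP; rewrite -subr_eq0 h //.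
  apply: (@size_drop_top R r hr); last by rewrite coefB e1 e2 subrr.
  by rewrite (leq_trans (size_polyD _ _)) // geq_max size_polyN s1 s2 leqnn.
by have := @condM_lin R r mom n _ _ 1 c1 c2; rewrite scale1r.
Qed.

Arguments mop_uniq {n P1 P2} _ _.

Lemma main_thm :
  perfectM mom /\
  forall n : 'I_r -> nat,
    (forall phi : lcoef_ty n n, isPhi mom n n phi -> alphaPhi n n phi != -1) /\
    (forall (P : {poly complex R}) (phi : lcoef_ty n n),
        isMOP mom n P -> isPhi mom n n phi ->
        forall z : complex R, z != 0 ->
          P.[z + z^-1] = (1 + alphaPhi n n phi)^-1 * (leval n n phi z + leval n n phi z^-1)) /\
    (forall (j : 'I_r), (0 < n j)%N ->
      forall (P : {poly complex R}) (phi : lcoef_ty n (msubE n j)),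
        isMOP mom n P -> isPhi mom n (msubE n j) phi ->
        forall z : complex R, z != 0 ->
          P.[z + z^-1] = leval n (msubE n j) phi z + leval n (msubE n j) phi z^-1).
Proof.
have UA := @uniq_all R r mom hr hsym hnn hnS.
split.
  move=> n; set N := msum n.
  have [p [hps hp1 hpc]] := exL hr (hnn n).
  have ha := @alpha_ne R r mom hr hsym hnS n p (UA n) hps hp1 hpc.
  have [Q [hQs hQN hQT hQM]] := @Q_of R r mom hr hsym n n N p (fun l => leqnSn _) hps hpc.
  rewrite hp1 in hQN.
  have hQN' : Q`_N != 0 by rewrite hQN.
  have hm := @mop_of n Q hQs hQN' hQM.
  exists ((Q`_N)^-1 *: Q); split; first exact: hm.
  by move=> P hP; exact: mop_uniq hm hP.
move=> n.
have psi_eval N p z : (size p <= (N + N).+1)%N -> z != 0 ->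
    (psi N p).[z] = p.[z] + z ^+ (N + N) * p.[z^-1].
  by move=> hs z0; rewrite /psi hornerD rfl_eval.
split; [|split].
- move=> phi hphi; have [hs h1 h0 hc] := toP_prop hphi.
  have := @alpha_ne R r mom hr hsym hnS n _ (UA n) hs h1 hc.
  by rewrite h0 => H; apply: contra H => /eqP ->; rewrite addrN.
- move=> P phi hP hphi z z0; have [hs h1 h0 hc] := toP_prop hphi.
  set p := toP phi in hs h1 h0 hc *.
  have ha := @alpha_ne R r mom hr hsym hnS n p (UA n) hs h1 hc.
  have [Q [hQs hQN hQT hQM]] :=
    @Q_of R r mom hr hsym n n (msum n) p (fun l => leqnSn _) hs hc.
  rewrite h1 in hQN.
  have hQN' : Q`_(msum n) != 0 by rewrite hQN.
  have eP : P = (Q`_(msum n))^-1 *: Q := mop_uniq hP (mop_of hQs hQN' hQM).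
  have hT := Tp_eval hQs z0.
  rewrite hQT psi_eval // in hT.
  rewrite eP hornerZ hQN -h0 !leval_toP ?invr_eq0 // -/p; congr (_ * _).
  have zN : z ^+ msum n != 0 by rewrite expf_neq0.
  apply: (mulfI zN); rewrite -hT exprVn exprD; field.
  by rewrite zN.
move=> j hj P phi hP hphi z z0; have [hs h1 h0 hc] := toP_prop hphi.
set m := msubE n j in phi hP hphi hs h1 h0 hc *.
set p' := toP phi in hs h1 h0 hc *.
have hNM : msum n = (msum m).+1 by exact: (@msum_sub r hr n j hj).
set M := msum m in hs h1 hc hNM *.
pose p := p' * 'X.
have hps : (size p <= (msum n + msum n).+1)%N.
  rewrite (leq_trans (size_polyMleq _ _)) // size_polyX; lia.
have hp1 : p`_(msum n + msum n) = 1.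
  rewrite /p coefMX; have -> : (msum n + msum n == 0)%N = false by lia.
  by rewrite -h1; congr (p'`_ _); lia.
have hp0 : p`_0 = 0 by rewrite /p coefMX.
have hpc : condLL mom n m (msum n) p.
  move=> l k hk; have -> : p = p' * 'X^1 by rewrite expr1.
  rewrite (Lf_MXn mom) -(hc l k hk); congr (Lf _ _ _ _); lia.
have hnm : forall l, (n l <= (m l).+1)%N by move=> l; rewrite /m /msubE; lia.
have [Q [hQs hQN hQT hQM]] :=
  @Q_of R r mom hr hsym n m (msum n) p hnm hps hpc.
rewrite hp1 hp0 addr0 in hQN.
have hQN' : Q`_(msum n) != 0 by rewrite hQN oner_eq0.
have eP : P = Q.
  by rewrite (mop_uniq hP (mop_of hQs hQN' hQM)) hQN invr1 scale1r.
have hT := Tp_eval hQs z0.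
rewrite hQT psi_eval // /p !hornerMX in hT.
rewrite eP !leval_toP ?invr_eq0 // -/p' -/M.
rewrite hNM in hT.
have zN : z ^+ M.+1 != 0 by rewrite expf_neq0.
apply: (mulfI zN); rewrite -hT exprVn invrK exprD !exprS.
have zM : z ^+ M != 0 by rewrite expf_neq0.
by field; rewrite zM z0.
Qed.

End Thm.


Theorem theorem10p2 (R : rcfType) (r : nat) (hr : (0 < r)%N)
  (mom : 'I_r -> int -> complex R)
  (hsym : forall (j : 'I_r) (k : nat), mom j k%:Z = mom j (- k%:Z))
  (hnn : forall n : 'I_r -> nat, normalL mom n n)
  (hnS : forall (n : 'I_r -> nat) (j : 'I_r), normalL mom (maddE n j) n) :
  perfectM mom /\
  forall n : 'I_r -> nat,
    (forall phi : lcoef_ty n n, isPhi mom n n phi -> alphaPhi n n phi != -1) /\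
    (forall (P : {poly complex R}) (phi : lcoef_ty n n),
        isMOP mom n P -> isPhi mom n n phi ->
        forall z : complex R, z != 0 ->
          P.[z + z^-1] = (1 + alphaPhi n n phi)^-1 * (leval n n phi z + leval n n phi z^-1)) /\
    (forall (j : 'I_r), (0 < n j)%N ->
      forall (P : {poly complex R}) (phi : lcoef_ty n (msubE n j)),
        isMOP mom n P -> isPhi mom n (msubE n j) phi ->
        forall z : complex R, z != 0 ->
          P.[z + z^-1] = leval n (msubE n j) phi z + leval n (msubE n j) phi z^-1).
Proof.
exact: (@main_thm R r mom hr hsym hnn hnS).
Qed.
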